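(* Let $R=R_1\times\cdots\times R_n$ be a direct product of finite commutative local rings with identity, with $n\geq 4$, and let $I=I_1\times\cdots\times I_n$ where $I_i$ is a proper ideal of $R_i$ for every $i=1,\dots,n$. Then $\Gamma''_I(R)$ is not planar.
   Context: The product has componentwise operations. For a commutative ring $R$ and an ideal $I$ of $R$, $\Gamma''_I(R)$ is the simple undirected graph whose vertex set is $\{x\in R\setminus I : xR+I\neq R\}$, with distinct vertices $x,y$ adjacent if and only if $x\notin yR+I$ and $y\notin xR+I$. A graph is planar if it can be drawn in the plane with edges meeting only at their endpoints. *)

(* Defs.v *)
From HB Require Import structures.
From mathcomp Require Import all_boot all_order all_algebra ring_quotient.
From mathcomp Require Import all_classical all_reals all_analysis.
From mathcomp Require Import Rstruct Rstruct_topology.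
Set Implicit Arguments. Unset Strict Implicit. Unset Printing Implicit Defensive.
Import Order.TTheory GRing.Theory Num.Theory.
Local Open Scope ring_scope.

Section ProdRing.
Variables (n : nat) (R : 'I_n -> comPzRingType).
Definition prodR := {dffun forall i : 'I_n, R i}.
HB.instance Definition _ := Choice.on prodR.
Definition prod0 : prodR := [ffun i => 0].
Definition prodN (x : prodR) : prodR := [ffun i => - x i].
Definition prodD (x y : prodR) : prodR := [ffun i => x i + y i].
Definition prod1 : prodR := [ffun i => 1].
Definition prodM (x y : prodR) : prodR := [ffun i => x i * y i].
Lemma prodDA : associative prodD.
Proof. by move=> x y z; apply/ffunP=> i; rewrite !ffunE addrA. Qed.
Lemma prodDC : commutative prodD.
Proof. by move=> x y; apply/ffunP=> i; rewrite !ffunE addrC. Qed.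
Lemma prod0D : left_id prod0 prodD.
Proof. by move=> x; apply/ffunP=> i; rewrite !ffunE add0r. Qed.
Lemma prodND : left_inverse prod0 prodN prodD.
Proof. by move=> x; apply/ffunP=> i; rewrite !ffunE addNr. Qed.
HB.instance Definition _ := GRing.isZmodule.Build prodR prodDA prodDC prod0D prodND.
Lemma prodMA : associative prodM.
Proof. by move=> x y z; apply/ffunP=> i; rewrite !ffunE mulrA. Qed.
Lemma prodMC : commutative prodM.
Proof. by move=> x y; apply/ffunP=> i; rewrite !ffunE mulrC. Qed.
Lemma prod1M : left_id prod1 prodM.
Proof. by move=> x; apply/ffunP=> i; rewrite !ffunE mul1r. Qed.
Lemma prodMDl : left_distributive prodM prodD.
Proof. by move=> x y z; apply/ffunP=> i; rewrite !ffunE mulrDl. Qed.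
HB.instance Definition _ :=
  GRing.Zmodule_isComPzRing.Build prodR prodMA prodMC prod1M prodMDl.
End ProdRing.

Lemma prodR_addE n (R : 'I_n -> comPzRingType) (x y : prodR R) i :
  (x + y) i = x i + y i.
Proof. by rewrite ffunE. Qed.
Lemma prodR_mulE n (R : 'I_n -> comPzRingType) (x y : prodR R) i :
  (x * y) i = x i * y i.
Proof. by rewrite ffunE. Qed.

Definition prod_ideal n (R : 'I_n -> comPzRingType) (I : forall i, {pred R i})
  : {pred prodR R} := fun x => [forall i, x i \in I i].

Definition maximal_ideal (A : nzRingType) (M : {pred A}) : Prop :=
  idealr_closed M /\
  forall J : {pred A}, idealr_closed J -> {subset M <= J} -> J =i M.

Definition local_ring (A : comNzRingType) : Prop :=
  exists M : {pred A}, maximal_ideal M /\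
    forall M' : {pred A}, maximal_ideal M' -> M' =i M.

Definition in_xR_I (A : comPzRingType) (I : {pred A}) (x y : A) : Prop :=
  exists r a, a \in I /\ y = x * r + a.

Definition xR_I_proper (A : comPzRingType) (I : {pred A}) (x : A) : Prop :=
  ~ (forall z : A, in_xR_I I x z).

Definition G2_vertex (A : comPzRingType) (I : {pred A}) (x : A) : Prop :=
  x \notin I /\ xR_I_proper I x.

Definition G2_adj (A : comPzRingType) (I : {pred A}) (x y : A) : Prop :=
  x <> y /\ ~ in_xR_I I y x /\ ~ in_xR_I I x y.

Local Open Scope classical_set_scope.
Definition plane := (Rdefinitions.R * Rdefinitions.R)%type.

Definition planar (T : Type) (V : T -> Prop) (E : T -> T -> Prop) : Prop :=
  exists (p : T -> plane) (g : T -> T -> Rdefinitions.R -> plane),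
    (forall u v, V u -> V v -> p u = p v -> u = v) /\
    (forall u v, V u -> V v -> E u v ->
       [/\ {within [set t : Rdefinitions.R | 0 <= t <= 1],
              continuous (g u v)},
           g u v 0 = p u, g u v 1 = p v,
           (forall s t, 0 <= s <= 1 -> 0 <= t <= 1 -> g u v s = g u v t -> s = t)
         & (forall t w, 0 < t < 1 -> V w -> g u v t <> p w)]) /\
    (forall u v u' v', V u -> V v -> E u v -> V u' -> V v' -> E u' v' ->
       ~ ((u' = u /\ v' = v) \/ (u' = v /\ v' = u)) ->
       forall s t, 0 <= s <= 1 -> 0 <= t <= 1 -> g u v s = g u' v' t ->
       exists w, V w /\ g u v s = p w).

(* Main.v *)
Require Import Defs.
From HB Require Import structures.
From mathcomp Require Import all_boot all_order all_algebra ring_quotient.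
From mathcomp Require Import all_classical all_reals all_analysis.
From mathcomp Require Import Rstruct Rstruct_topology.
From mathcomp Require Import ring lra.
Definition S5 : seq (nat * nat * nat * nat) := [:: (0, 1, 2, 3); (0, 1, 2, 4); (0, 1, 3, 4); (0, 2, 1, 3); (0, 2, 1, 4); (0, 2, 3, 4); (0, 3, 1, 2); (0, 3, 1, 4); (0, 3, 2, 4); (0, 4, 1, 2); (0, 4, 1, 3); (0, 4, 2, 3); (1, 2, 3, 4); (1, 3, 2, 4); (1, 4, 2, 3)].

Definition alS (A : nat -> nat -> nat -> bool) (x : nat * nat * nat * nat) : bool :=
  let: (a, b, c, d) := x in A a b c (+) A a b d (+) A c d a (+) A c d b.
Definition klS (H : nat -> nat -> bool) (x : nat * nat * nat * nat) : bool :=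
  let: (a, b, c, d) := x in H a c (+) H a d (+) H b c (+) H b d.

Lemma iter_addb n (x : bool) : iter n (addb x) false = x && odd n.
Proof. elim: n => [|n IH] /=; first by rewrite andbF.
by rewrite IH; clear IH; case: x; case: (odd n). Qed.

Lemma xor_even (T : eqType) (L : seq T) (F : T -> bool) :
  all (fun t => ~~ odd (count_mem t L)) L -> \big[addb/false]_(t <- L) F t = false.
Proof.
move=> h; rewrite -big_undup_iterop_count; apply: big1_seq => t /andP [_ tL].
rewrite mem_undup in tL; have := allP h t tL => ho.
by rewrite Monoid.iteropE iter_addb (negbTE ho) andbF.
Qed.

Definition LL5 : seq (nat * nat * nat) :=
  flatten [seq (let: (a, b, c, d) := x in [:: (a, b, c); (a, b, d); (c, d, a); (c, d, b)]) | x <- S5].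

Lemma A_cancel (A : nat -> nat -> nat -> bool) : \big[addb/false]_(x <- S5) alS A x = false.
Proof.
have -> : \big[addb/false]_(x <- S5) alS A x = \big[addb/false]_(t <- LL5) A t.1.1 t.1.2 t.2.
  rewrite /LL5 big_flatten big_map; apply: eq_bigr => -[[[a b] c] d] _.
  by rewrite /= !big_cons big_nil /= addbF !addbA.
by apply: xor_even; vm_compute.
Qed.

Lemma comb_lemma (H : nat -> nat -> bool) :
  (forall x y, (x < 5)%N -> (y < 5)%N -> x != y -> H y x = ~~ H x y) ->
  (forall x y z, H x y -> H y z -> H x z) ->
  \big[addb/false]_(x <- S5) klS H x = true.
Proof.
move=> As Tr; rewrite /S5 !big_cons big_nil /=.
rewrite ?(As 0 1 isT isT isT) ?(As 0 2 isT isT isT) ?(As 1 2 isT isT isT) ?(As 0 3 isT isT isT) ?(As 1 3 isT isT isT) ?(As 2 3 isT isT isT) ?(As 0 4 isT isT isT) ?(As 1 4 isT isT isT) ?(As 2 4 isT isT isT) ?(As 3 4 isT isT isT).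
have c012 : H 0 1 ==> H 1 2 ==> H 0 2 by apply/implyP => h1; apply/implyP => h2; exact: Tr _ _ _ h1 h2.
have d012 : H 2 1 ==> H 1 0 ==> H 2 0 by apply/implyP => h1; apply/implyP => h2; exact: Tr _ _ _ h1 h2.
rewrite (As 1 2 isT isT isT) (As 0 1 isT isT isT) (As 0 2 isT isT isT) in d012.
have c013 : H 0 1 ==> H 1 3 ==> H 0 3 by apply/implyP => h1; apply/implyP => h2; exact: Tr _ _ _ h1 h2.
have d013 : H 3 1 ==> H 1 0 ==> H 3 0 by apply/implyP => h1; apply/implyP => h2; exact: Tr _ _ _ h1 h2.
rewrite (As 1 3 isT isT isT) (As 0 1 isT isT isT) (As 0 3 isT isT isT) in d013.
have c014 : H 0 1 ==> H 1 4 ==> H 0 4 by apply/implyP => h1; apply/implyP => h2; exact: Tr _ _ _ h1 h2.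
have d014 : H 4 1 ==> H 1 0 ==> H 4 0 by apply/implyP => h1; apply/implyP => h2; exact: Tr _ _ _ h1 h2.
rewrite (As 1 4 isT isT isT) (As 0 1 isT isT isT) (As 0 4 isT isT isT) in d014.
have c023 : H 0 2 ==> H 2 3 ==> H 0 3 by apply/implyP => h1; apply/implyP => h2; exact: Tr _ _ _ h1 h2.
have d023 : H 3 2 ==> H 2 0 ==> H 3 0 by apply/implyP => h1; apply/implyP => h2; exact: Tr _ _ _ h1 h2.
rewrite (As 2 3 isT isT isT) (As 0 2 isT isT isT) (As 0 3 isT isT isT) in d023.
have c024 : H 0 2 ==> H 2 4 ==> H 0 4 by apply/implyP => h1; apply/implyP => h2; exact: Tr _ _ _ h1 h2.
have d024 : H 4 2 ==> H 2 0 ==> H 4 0 by apply/implyP => h1; apply/implyP => h2; exact: Tr _ _ _ h1 h2.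
rewrite (As 2 4 isT isT isT) (As 0 2 isT isT isT) (As 0 4 isT isT isT) in d024.
have c034 : H 0 3 ==> H 3 4 ==> H 0 4 by apply/implyP => h1; apply/implyP => h2; exact: Tr _ _ _ h1 h2.
have d034 : H 4 3 ==> H 3 0 ==> H 4 0 by apply/implyP => h1; apply/implyP => h2; exact: Tr _ _ _ h1 h2.
rewrite (As 3 4 isT isT isT) (As 0 3 isT isT isT) (As 0 4 isT isT isT) in d034.
have c123 : H 1 2 ==> H 2 3 ==> H 1 3 by apply/implyP => h1; apply/implyP => h2; exact: Tr _ _ _ h1 h2.
have d123 : H 3 2 ==> H 2 1 ==> H 3 1 by apply/implyP => h1; apply/implyP => h2; exact: Tr _ _ _ h1 h2.
rewrite (As 2 3 isT isT isT) (As 1 2 isT isT isT) (As 1 3 isT isT isT) in d123.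
have c124 : H 1 2 ==> H 2 4 ==> H 1 4 by apply/implyP => h1; apply/implyP => h2; exact: Tr _ _ _ h1 h2.
have d124 : H 4 2 ==> H 2 1 ==> H 4 1 by apply/implyP => h1; apply/implyP => h2; exact: Tr _ _ _ h1 h2.
rewrite (As 2 4 isT isT isT) (As 1 2 isT isT isT) (As 1 4 isT isT isT) in d124.
have c134 : H 1 3 ==> H 3 4 ==> H 1 4 by apply/implyP => h1; apply/implyP => h2; exact: Tr _ _ _ h1 h2.
have d134 : H 4 3 ==> H 3 1 ==> H 4 1 by apply/implyP => h1; apply/implyP => h2; exact: Tr _ _ _ h1 h2.
rewrite (As 3 4 isT isT isT) (As 1 3 isT isT isT) (As 1 4 isT isT isT) in d134.
have c234 : H 2 3 ==> H 3 4 ==> H 2 4 by apply/implyP => h1; apply/implyP => h2; exact: Tr _ _ _ h1 h2.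
have d234 : H 4 3 ==> H 3 2 ==> H 4 2 by apply/implyP => h1; apply/implyP => h2; exact: Tr _ _ _ h1 h2.
rewrite (As 3 4 isT isT isT) (As 2 3 isT isT isT) (As 2 4 isT isT isT) in d234.
move: c012 d012 c013 d013 c014 d014 c023 d023 c024 d024 c034 d034 c123 d123 c124 d124 c134 d134 c234 d234.
move: (H 0 1) (H 0 2) (H 0 3) (H 0 4) (H 1 2) (H 1 3) (H 1 4) (H 2 3) (H 2 4) (H 3 4).
by do 10 case.
Qed.
Import Order.TTheory GRing.Theory Num.Theory.
Import numFieldNormedType.Exports.
Local Open Scope ring_scope.
Local Open Scope classical_set_scope.
Section An.
Variable R : realType.
Definition clamp (s : R) := (`|s| - `|s - 1| + 1) / 2.

Lemma clamp_in s : 0 <= clamp s <= 1.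
Proof.
rewrite /clamp; have [h1|h1] := lerP 1 s.
- have h0 : 0 <= s by lra.
  rewrite [`|s|]ger0_norm //; apply/andP; split; lra.
- have [h0|h0] := lerP 0 s.
  + rewrite [`|s|]ger0_norm //; apply/andP; split; lra.
  + rewrite [`|s|]ltr0_norm //; apply/andP; split; lra.
Qed.

Lemma clamp_id s : 0 <= s <= 1 -> clamp s = s.
Proof.
case/andP=> h0 h1; rewrite /clamp [`|s|]ger0_norm // [`|s - 1|]ler0_norm; last by lra.
lra.
Qed.

Lemma clamp_cont : continuous (clamp : R -> R).
Proof.
move=> x; rewrite /clamp.
apply: cvgM; last exact: cvg_cst.
apply: cvgD; last exact: cvg_cst.
apply: cvgB; first exact: (@norm_continuous _ R^o).
apply: (continuous_comp (f := fun s : R => s - 1) (g := Num.Def.normr)).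
  by apply: cvgB; [exact: cvg_id | exact: cvg_cst].
exact: (@norm_continuous _ R^o).
Qed.

Lemma ext_cont (g : R -> R * R) :
  {within [set t : R | 0 <= t <= 1], continuous g} -> continuous (g \o clamp).
Proof.
move=> /subspace_continuousP gc x.
have cA : forall y, [set t : R | 0 <= t <= 1] (clamp y) by move=> y; exact: clamp_in.
have H := gc _ (cA x).
apply: cvg_comp H.
move=> W /= hW.
have := @clamp_cont x _ hW.
rewrite nbhs_simpl /=; apply: filterS => y; apply; exact: cA.
Qed.

Lemma fst_cont {h : R -> R * R} : continuous h -> continuous (fun s => (h s).1).
Proof.
move=> hc x; apply: (continuous_comp (f := h) (g := fst)); first exact: hc.
exact: cvg_fst.
Qed.
Lemma snd_cont {h : R -> R * R} : continuous h -> continuous (fun s => (h s).2).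
Proof.
move=> hc x; apply: (continuous_comp (f := h) (g := snd)); first exact: hc.
exact: cvg_snd.
Qed.

Definition sq01 : set (R * R) := `[0, 1] `*` `[0, 1].

Lemma sq01P (st : R * R) : sq01 st <-> (0 <= st.1 <= 1) /\ (0 <= st.2 <= 1).
Proof.
rewrite /sq01 /=.
have E : forall x : R, (`[0, 1] : set R) x <-> 0 <= x <= 1.
  by move=> x; rewrite /= in_itv.
by split => [[/E h1 /E h2]|[h1 h2]]; split => //; apply/E.
Qed.

Lemma sq01_compact : compact sq01.
Proof. exact: compact_setX (@segment_compact R 0 1) (@segment_compact R 0 1). Qed.

Lemma sq01_n0 : sq01 !=set0.
Proof. by exists (0, 0); apply/sq01P; rewrite /= lexx ler01. Qed.

Lemma comp1_cont {phi : R -> R} : continuous phi -> continuous (fun st : R * R => phi st.1).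
Proof.
move=> pc x; apply: (continuous_comp (f := fst) (g := phi)); first exact: cvg_fst.
exact: pc.
Qed.
Lemma comp2_cont {phi : R -> R} : continuous phi -> continuous (fun st : R * R => phi st.2).
Proof.
move=> pc x; apply: (continuous_comp (f := snd) (g := phi)); first exact: cvg_snd.
exact: pc.
Qed.


Lemma contD (T : topologicalType) (a b : T -> R) : continuous a -> continuous b ->
  continuous (fun x => a x + b x).
Proof. by move=> ac bc x; apply: cvgD; [exact: ac | exact: bc]. Qed.
Lemma contB (T : topologicalType) (a b : T -> R) : continuous a -> continuous b ->
  continuous (fun x => a x - b x).
Proof. by move=> ac bc x; apply: cvgB; [exact: ac | exact: bc]. Qed.
Lemma contMc (T : topologicalType) (a : T -> R) (k : R) : continuous a ->
  continuous (fun x => a x * k).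
Proof. by move=> ac x; apply: cvgM; [exact: ac | exact: cvg_cst]. Qed.
Lemma contC (T : topologicalType) (k : R) : continuous (fun x : T => k).
Proof. by move=> x; exact: cvg_cst. Qed.
Lemma contN (T : topologicalType) (a : T -> R) : continuous a ->
  continuous (fun x => `|a x|).
Proof.
move=> ac x; apply: (continuous_comp (f := a) (g := fun x : R => `|x|)); first exact: ac.
exact: (@norm_continuous _ R^o).
Qed.
Lemma cont_fst : continuous (fun st : R * R => st.1).
Proof. by move=> x; exact: cvg_fst. Qed.
Lemma cont_snd : continuous (fun st : R * R => st.2).
Proof. by move=> x; exact: cvg_snd. Qed.
Lemma evt_sq {G : R * R -> R} : continuous G ->
  exists2 c, sq01 c & forall st, sq01 st -> G c <= G st.
Proof.
move=> Gc.
have [c cA cmin] := compact_EVT_min sq01_n0 sq01_compact (continuous_subspaceT (A := sq01) Gc).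
exists c; first by move: cA; rewrite inE.
by move=> st hst; apply: cmin; rewrite inE.
Qed.

Lemma normc_cont : continuous (fun x : R => `|x|).
Proof. exact: (@norm_continuous _ R^o). Qed.

Lemma sep_lemma (e f : R -> R * R) : continuous e -> continuous f ->
  (forall s t, 0 <= s <= 1 -> 0 <= t <= 1 -> e s <> f t) ->
  exists2 m, 0 < m & forall s t, 0 <= s <= 1 -> 0 <= t <= 1 ->
     m <= `|(e s).1 - (f t).1| + `|(e s).2 - (f t).2|.
Proof.
move=> ec fc hd.
pose G (st : R * R) := `|(e st.1).1 - (f st.2).1| + `|(e st.1).2 - (f st.2).2|.
have Gc : continuous G.
  apply: contD; apply: contN; apply: contB.
  - exact: (comp1_cont (fst_cont ec)).
  - exact: (comp2_cont (fst_cont fc)).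
  - exact: (comp1_cont (snd_cont ec)).
  - exact: (comp2_cont (snd_cont fc)).
have [c /sq01P [c1 c2] cmin] := evt_sq Gc.
exists (G c).
  rewrite /G lt_def; apply/andP; split; last by rewrite addr_ge0.
  apply/negP; move/eqP => h.
  have h1 : `|(e c.1).1 - (f c.2).1| = 0.
    apply/eqP; rewrite eq_le normr_ge0 andbT; rewrite -h lerDl //.
  have h2 : `|(e c.1).2 - (f c.2).2| = 0.
    apply/eqP; rewrite eq_le normr_ge0 andbT; rewrite -h lerDr //.
  apply: (hd _ _ c1 c2).
  move/normr0_eq0/subr0_eq: h1 => h1.
  move/normr0_eq0/subr0_eq: h2 => h2.
  by move: h1 h2; case: (e c.1) => a b; case: (f c.2) => a' b' /= -> ->.
move=> s t hs ht; exact: (cmin (s, t) (proj2 (sq01P (s, t)) (conj hs ht))).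
Qed.

Lemma unif_lemma (phi : R -> R) (eps : R) : continuous phi -> 0 < eps ->
  exists2 d, 0 < d & forall s t, 0 <= s <= 1 -> 0 <= t <= 1 ->
     `|s - t| < d -> `|phi s - phi t| < eps.
Proof.
move=> pc he.
pose D (st : R * R) := `|phi st.1 - phi st.2|.
pose G (st : R * R) := `|st.1 - st.2| + (eps - D st + `|eps - D st|) / 2.
have Dc : continuous D.
  apply: contN; apply: contB; [exact: (comp1_cont pc) | exact: (comp2_cont pc)].
have Gc : continuous G.
  apply: contD.
    apply: contN; apply: contB; [exact: cont_fst | exact: cont_snd].
  apply: contMc; apply: contD.
    apply: contB; [exact: contC | exact: Dc].
  apply: contN; apply: contB; [exact: contC | exact: Dc].
have [c /sq01P [c1 c2] cmin] := evt_sq Gc.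
have Mge : forall x : R, 0 <= (x + `|x|) / 2.
  move=> x; have [hx|hx] := lerP 0 x.
    by rewrite [`|x|]ger0_norm //; lra.
  by rewrite [`|x|]ltr0_norm //; lra.
exists (G c).
  rewrite lt_def; apply/andP; split; last by rewrite /G addr_ge0.
  apply/negP; move/eqP => h.
  have h1 : `|c.1 - c.2| = 0.
    apply/eqP; rewrite eq_le normr_ge0 andbT; rewrite -h /G lerDl //.
  have h2 : (eps - D c + `|eps - D c|) / 2 = 0.
    apply/eqP; rewrite eq_le Mge andbT; rewrite -h /G lerDr //.
  move/normr0_eq0/subr0_eq: h1 => h1.
  move: h2; rewrite /D h1 subrr normr0 subr0 [`|eps|]ger0_norm; last exact: ltW.
  lra.
move=> s t hs ht hst; rewrite ltNge; apply/negP => hD.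
have := cmin (s, t) (proj2 (sq01P (s, t)) (conj hs ht)).
move: hst; set g := G c => hst.
rewrite /G /D /=.
set X := `|phi s - phi t|.
have -> : `|eps - X| = X - eps.
  by rewrite distrC ger0_norm // subr_ge0.
lra.
Qed.

End An.
Arguments sep_lemma {R e f}. Arguments unif_lemma {R phi eps}. Arguments ext_cont {R g}. Arguments fst_cont {R h}. Arguments snd_cont {R h}.
Arguments clamp_id {R s}.
Section Disc.
Variable R : realType.

Lemma core_half (u1 u2 z1 z2 w1 w2 : R) : 0 < u1*z1 + u2*z2 -> 0 < u1*w1+u2*w2 ->
  (z2 < 0 \/ (z2 = 0 /\ z1 <= 0)) -> (0 < w2 \/ (w2 = 0 /\ 0 < w1)) ->
  (0 < (z1*w2 - z2*w1)*(w2 - z2)) = (0 <= u1).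
Proof.
move=> hz hw hzz hww.
case: (boolP (0 <= u1)) => hu.
- apply/idP.
  case: hzz => [hz2|[hz2 hz1]]; case: hww => [hw2|[hw2 hw1]].
  + have hc : 0 < z1*w2 - z2*w1.
      have [hu0|hu0] := boolP (u1 == 0).
        move/eqP: hu0 => hu0; subst u1; exfalso; nra.
      have hu' : 0 < u1 by rewrite lt_def hu0 hu.
      have p1 : 0 < (u1*z1 + u2*z2) * w2 by apply: mulr_gt0.
      have p2 : 0 < (u1*w1 + u2*w2) * (- z2) by apply: mulr_gt0; lra.
      have key : 0 < u1 * (z1*w2 - z2*w1) by nra.
      by rewrite pmulr_rgt0 in key.
    by apply: mulr_gt0 => //; lra.
  + subst w2.
    have a : 0 < - z2 by lra.
    have b : 0 < (-z2) * w1 by apply: mulr_gt0.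
    have c : 0 < ((-z2)*w1) * (-z2) by apply: mulr_gt0.
    nra.
  + subst z2; exfalso.
    have : u1 * z1 <= 0 by rewrite mulr_ge0_le0.
    nra.
  + subst; exfalso.
    have : u1 * z1 <= 0 by rewrite mulr_ge0_le0.
    nra.
- apply/negP => h; move: hu; rewrite -ltNge => hu.
  case: hzz => [hz2|[hz2 hz1]]; case: hww => [hw2|[hw2 hw1]].
  + have hc : z1*w2 - z2*w1 < 0.
      have p1 : 0 < (u1*z1 + u2*z2) * w2 by apply: mulr_gt0.
      have p2 : 0 < (u1*w1 + u2*w2) * (- z2) by apply: mulr_gt0; lra.
      have key : 0 < u1 * (z1*w2 - z2*w1) by nra.
      by rewrite nmulr_rgt0 in key.
    have : 0 < (z1*w2 - z2*w1) * (w2 - z2) by exact: h.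
    rewrite nmulr_rgt0 //; lra.
  + subst w2.
    have : 0 < u1 * w1 by nra.
    rewrite nmulr_rgt0 //; lra.
  + subst z2.
    have hz1' : z1 < 0.
      have : 0 < u1 * z1 by nra.
      by rewrite nmulr_rgt0.
    have : 0 < (z1 * w2) * w2 by nra.
    rewrite -mulrA nmulr_rgt0 //; nra.
  + subst.
    have : 0 < u1 * w1 by nra.
    rewrite nmulr_rgt0 //; lra.
Qed.

Definition hb (z : R * R) : bool := (0 < z.2) || ((z.2 == 0) && (0 < z.1)).
Definition sg (z w : R * R) : bool :=
  (hb z != hb w) && (0 < (z.1 * w.2 - z.2 * w.1) * (w.2 - z.2)).
Definition dotp (z w : R * R) : R := z.1 * w.1 + z.2 * w.2.
Definition negp (z : R * R) : R * R := (- z.1, - z.2).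

Lemma sg_sym z w : sg z w = sg w z.
Proof.
rewrite /sg eq_sym.
have -> : (w.1 * z.2 - w.2 * z.1) * (z.2 - w.2) = (z.1 * w.2 - z.2 * w.1) * (w.2 - z.2) by ring.
by [].
Qed.

Lemma hbP z : (hb z = false) <-> (z.2 < 0 \/ (z.2 = 0 /\ z.1 <= 0)).
Proof.
rewrite /hb; case: (ltrgtP z.2 0) => h /=.
- by split => // _; left.
- split => // -[h'|[h' _]]; exfalso; lra.
- case: (ltrgtP z.1 0) => h1 /=.
  + by split => // _; right; split => //; exact: ltW.
  + split => // -[h'|[_ h']]; exfalso; lra.
  + by split => // _; right; split => //; rewrite h1.
Qed.

Lemma hbT z : (hb z = true) <-> (0 < z.2 \/ (z.2 = 0 /\ 0 < z.1)).
Proof.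
rewrite /hb; case: (ltrgtP z.2 0) => h /=.
- split => // -[h'|[h' _]]; exfalso; lra.
- by split => // _; left.
- case: (ltrgtP z.1 0) => h1 /=.
  + split => // -[h'|[_ h']]; exfalso; lra.
  + by split => // _; right.
  + split => // -[h'|[_ h']]; exfalso; lra.
Qed.

Lemma sg_half {u z w} : 0 < dotp u z -> 0 < dotp u w ->
  sg z w = (0 <= u.1) && (hb z != hb w).
Proof.
move=> hz hw.
wlog: z w hz hw / hb z = false.
  move=> H; case E: (hb z); last by rewrite (H z w hz hw E) E.
  case E2: (hb w).
    by rewrite /sg E E2 andbF.
  by rewrite sg_sym (H w z hw hz E2) E E2.
move=> Ez; rewrite /sg Ez.
case Ew: (hb w); last by rewrite andbF.
rewrite /= andbT.
apply: (@core_half u.1 u.2) => //; [exact: (proj1 (hbP z) Ez) | exact: (proj1 (hbT w) Ew)].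
Qed.

Lemma core_nz (z1 z2 w1 w2 : R) : 0 < z1*w1 + z2*w2 ->
  (z2 < 0 \/ (z2 = 0 /\ z1 <= 0)) -> (0 < w2 \/ (w2 = 0 /\ 0 < w1)) ->
  (z1*w2 - z2*w1)*(w2 - z2) != 0.
Proof.
move=> hd [hz2|[hz2 hz1]] [hw2|[hw2 hw1]].
- rewrite mulf_eq0 negb_or; apply/andP; split; last by apply/negP => /eqP; lra.
  apply/negP => /eqP hc.
  have e : z2 * (z1*w1 + z2*w2) = w2 * (z1^+2 + z2^+2) - z1 * (z1*w2 - z2*w1) by ring.
  rewrite hc mulr0 subr0 in e.
  have h1 : z2 * (z1*w1 + z2*w2) < 0 by rewrite nmulr_rlt0.
  have h2 : 0 <= w2 * (z1^+2 + z2^+2) by apply: mulr_ge0; [lra | apply: addr_ge0; exact: sqr_ge0].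
  lra.
- subst w2.
  have a : 0 < - z2 by lra.
  have b : 0 < (-z2) * w1 by apply: mulr_gt0.
  have c : 0 < ((-z2)*w1) * (-z2) by apply: mulr_gt0.
  apply/eqP => h; nra.
- subst z2.
  have hz1' : z1 < 0.
    rewrite lt_def hz1 andbT; apply/negP => /eqP h; subst z1; lra.
  have : (z1 * w2) * w2 < 0 by rewrite -mulrA nmulr_rlt0 // mulr_gt0.
  move=> hh; apply/eqP => h; nra.
- subst; exfalso.
  have : z1 * w1 <= 0 by rewrite mulr_le0_ge0 // ltW.
  lra.
Qed.

Lemma hb_neg {z} : dotp z z != 0 -> hb (negp z) = ~~ hb z.
Proof.
rewrite /hb /negp /dotp /= => hz.
case: (ltrgtP z.2 0) => h2 /=.
- by rewrite oppr_gt0 h2.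
- by rewrite oppr_gt0 (lt_gtF h2) oppr_eq0 (gt_eqF h2).
- rewrite h2 oppr0 ltxx eqxx /= oppr_gt0.
  case: (ltrgtP z.1 0) => h1 //.
  by move: hz; rewrite h1 h2 mulr0 addr0 eqxx.
Qed.

Lemma dot_nz {z w} : 0 < dotp z w -> dotp z z != 0.
Proof.
rewrite /dotp => h; apply/negP => /eqP h0.
have h1 : z.1 * z.1 = 0 by have := sqr_ge0 z.1; have := sqr_ge0 z.2; rewrite !expr2; lra.
have h2 : z.2 * z.2 = 0 by have := sqr_ge0 z.1; have := sqr_ge0 z.2; rewrite !expr2; lra.
move/eqP: h1; rewrite mulf_eq0 orbb => /eqP h1.
move/eqP: h2; rewrite mulf_eq0 orbb => /eqP h2.
by move: h; rewrite h1 h2 !mul0r addr0 ltxx.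
Qed.

Lemma sg_step {z w} : 0 < dotp z w -> sg z w (+) sg (negp z) (negp w) = (hb z != hb w).
Proof.
move=> hd.
have hz := dot_nz hd.
have hw : dotp w w != 0 by apply: (@dot_nz w z); rewrite /dotp mulrC [w.2 * _]mulrC.
rewrite /sg (hb_neg hz) (hb_neg hw).
have -> : ((negp z).1 * (negp w).2 - (negp z).2 * (negp w).1) * ((negp w).2 - (negp z).2)
  = - ((z.1 * w.2 - z.2 * w.1) * (w.2 - z.2)) by rewrite /negp /=; ring.
case Ez: (hb z); case Ew: (hb w) => //=.
- have nz : (w.1 * z.2 - w.2 * z.1) * (z.2 - w.2) != 0.
    apply: core_nz; [by rewrite /dotp in hd; lra | exact/hbP | exact/hbT].
  have -> : (z.1 * w.2 - z.2 * w.1) * (w.2 - z.2) = (w.1 * z.2 - w.2 * z.1) * (z.2 - w.2) by ring.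
  move: nz; set X := (w.1 * z.2 - w.2 * z.1) * (z.2 - w.2) => nz.
  rewrite oppr_gt0; case: (ltrgtP X 0) => //.
  by move=> h; move: nz; rewrite h eqxx.
- have nz : (z.1 * w.2 - z.2 * w.1) * (w.2 - z.2) != 0.
    apply: core_nz; [by rewrite /dotp in hd; lra | exact/hbP | exact/hbT].
  move: nz; set X := (z.1 * w.2 - z.2 * w.1) * (w.2 - z.2) => nz.
  rewrite oppr_gt0; case: (ltrgtP X 0) => //.
  by move=> h; move: nz; rewrite h eqxx.
Qed.

Lemma cell_lemma {u z1 z2 z3 z4} : 0 < dotp u z1 -> 0 < dotp u z2 -> 0 < dotp u z3 ->
  0 < dotp u z4 -> sg z1 z2 (+) sg z2 z3 (+) sg z3 z4 (+) sg z4 z1 = false.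
Proof.
move=> h1 h2 h3 h4.
rewrite (sg_half h1 h2) (sg_half h2 h3) (sg_half h3 h4) (sg_half h4 h1).
by case: (0 <= u.1); case: (hb z1); case: (hb z2); case: (hb z3); case: (hb z4).
Qed.

Definition xs (n : nat) (f : nat -> bool) : bool := \big[addb/false]_(i < n) f i.

Lemma xs_tele n (x : nat -> bool) : xs n (fun i => x i (+) x i.+1) = x 0%N (+) x n.
Proof.
rewrite /xs; elim: n => [|n IH]; first by rewrite big_ord0 addbb.
rewrite big_ord_recr /= IH.
by case: (x 0%N); case: (x n); case: (x n.+1).
Qed.

Lemma xs_split n (f g : nat -> bool) : xs n (fun i => f i (+) g i) = xs n f (+) xs n g.
Proof. by rewrite /xs big_split. Qed.

Lemma xs_ext n (f g : nat -> bool) : (forall i, (i < n)%N -> f i = g i) -> xs n f = xs n g.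
Proof. by move=> h; rewrite /xs; apply: eq_bigr => i _; apply: h. Qed.

Lemma grid_lemma (F : nat -> nat -> R * R) (N : nat) :
  (forall i j, (i < N)%N -> (j < N)%N -> exists u,
     [/\ 0 < dotp u (F i j), 0 < dotp u (F i.+1 j), 0 < dotp u (F i.+1 j.+1)
       & 0 < dotp u (F i j.+1)]) ->
  xs N (fun i => sg (F i 0%N) (F i.+1 0%N)) (+) xs N (fun i => sg (F i N) (F i.+1 N))
  (+) xs N (fun j => sg (F 0%N j) (F 0%N j.+1)) (+) xs N (fun j => sg (F N j) (F N j.+1))
  = false.
Proof.
move=> hc.
pose Rw j := xs N (fun i => sg (F i j) (F i.+1 j)).
pose V i j := sg (F i j) (F i j.+1).
have row : forall j, (j < N)%N -> Rw j (+) Rw j.+1 = V 0%N j (+) V N j.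
  move=> j hj; rewrite /Rw -xs_split -(xs_tele N (fun i => V i j)).
  apply: xs_ext => i hi.
  have [u [h1 h2 h3 h4]] := hc i j hi hj.
  have := cell_lemma h1 h2 h3 h4.
  rewrite [sg (F i.+1 j.+1) (F i j.+1)]sg_sym [sg (F i j.+1) (F i j)]sg_sym /V.
  set a := sg _ _; set b := sg _ _; set c := sg _ _; set d := sg _ _.
  by case: a; case: b; case: c; case: d.
have := xs_tele N Rw.
rewrite (@xs_ext N (fun i => Rw i (+) Rw i.+1) (fun j => V 0%N j (+) V N j)); last exact: row.
rewrite xs_split /Rw /V => <-.
set a := xs _ _; set b := xs _ _; by case: a; case: b.
Qed.

Definition psub (z w : R * R) : R * R := (z.1 - w.1, z.2 - w.2).

Lemma negp_psub z w : negp (psub z w) = psub w z.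
Proof. by rewrite /negp /psub /= !opprB. Qed.

Lemma path_lemma (z : nat -> R * R) (N : nat) :
  (forall i, (i < N)%N -> 0 < dotp (z i) (z i.+1)) ->
  xs N (fun i => sg (z i) (z i.+1)) (+) xs N (fun i => sg (negp (z i)) (negp (z i.+1)))
  = hb (z 0%N) (+) hb (z N).
Proof.
move=> h; rewrite -xs_split -(xs_tele N (fun i => hb (z i))).
apply: xs_ext => i hi; rewrite (sg_step (h i hi)).
by case: (hb (z i)); case: (hb (z i.+1)).
Qed.

Lemma hb_add z w : hb z -> hb w -> hb (z.1 + w.1, z.2 + w.2).
Proof.
move=> /hbT hz /hbT hw; apply/hbT => /=.
case: hz => [hz|[hz1 hz2]]; case: hw => [hw|[hw1 hw2]].
- by left; lra.
- by left; lra.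
- by left; lra.
- by right; split; lra.
Qed.
End Disc.
Arguments psub {R}. Arguments hb_add {R z w}. Arguments dotp {R}. Arguments sg {R}. Arguments hb {R}. Arguments negp {R}.

Section FinalDisc.
Variable R : realType.

Definition adm4 (x : nat * nat * nat * nat) : bool :=
  let: (a, b, c, d) := x in
  [&& (a < b)%N, (b < 5)%N, (c < d)%N, (d < 5)%N, a != c, a != d, b != c & b != d].
Definition adm3 (c d x : nat) : bool :=
  [&& (c < d)%N, (d < 5)%N, (x < 5)%N, x != c & x != d].

Lemma S5_adm : all adm4 S5.
Proof. by []. Qed.

Lemma K5_disc (P : nat -> R * R) (g : nat -> nat -> R -> R * R) (N : nat) (s : nat -> R) :
  (forall k l, (k < l)%N -> (l < 5)%N -> g k l (s 0%N) = P k /\ g k l (s N) = P l) ->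
  (forall x y, (x < 5)%N -> (y < 5)%N -> x != y -> P x != P y) ->
  (forall a b c d, adm4 (a, b, c, d) -> forall i j, (i < N)%N -> (j < N)%N ->
     exists u, [/\ 0 < dotp u (psub (g a b (s i)) (g c d (s j))),
                   0 < dotp u (psub (g a b (s i.+1)) (g c d (s j))),
                   0 < dotp u (psub (g a b (s i.+1)) (g c d (s j.+1)))
                 & 0 < dotp u (psub (g a b (s i)) (g c d (s j.+1)))]) ->
  (forall c d x, adm3 c d x -> forall i, (i < N)%N ->
     0 < dotp (psub (P x) (g c d (s i))) (psub (P x) (g c d (s i.+1)))) ->
  False.
Proof.
move=> hend hP hcell hpath.
pose A a b q := xs N (fun i => sg (psub (g a b (s i)) (P q)) (psub (g a b (s i.+1)) (P q))).
pose B c d x := xs N (fun j => sg (psub (P x) (g c d (s j))) (psub (P x) (g c d (s j.+1)))).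
pose H x y := hb (psub (P x) (P y)).
have G : forall x, adm4 x -> (let: (a, b, c, d) := x in
           A a b c (+) A a b d (+) B c d a (+) B c d b) = false.
  move=> [[[a b] c] d] hx.
  have hx' := hx; move: hx' => /and5P [hab hb5 hcd hd5 _].
  have := @grid_lemma R (fun i j => psub (g a b (s i)) (g c d (s j))) N (hcell a b c d hx).
  have [ea0 eb0] := hend a b hab hb5.
  have [ec0 ed0] := hend c d hcd hd5.
  by rewrite ea0 eb0 ec0 ed0.
have St : forall c d x, adm3 c d x -> B c d x = A c d x (+) H x c (+) H x d.
  move=> c d x hx.
  have hx' := hx; move: hx' => /and5P [hcd hd5 _ _ _].
  have := @path_lemma R (fun i => psub (P x) (g c d (s i))) N (hpath c d x hx).
  have [ec0 ed0] := hend c d hcd hd5.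
  rewrite ec0 ed0 -/(B c d x) -/(H x c) -/(H x d).
  have -> : xs N (fun i => sg (negp (psub (P x) (g c d (s i)))) (negp (psub (P x) (g c d (s i.+1)))))
    = A c d x by apply: xs_ext => i _; rewrite !negp_psub.
  move=> e; rewrite -addbA -e; by case: (B c d x); case: (A c d x).
have Hanti : forall x y, (x < 5)%N -> (y < 5)%N -> x != y -> H y x = ~~ H x y.
  move=> x y hx hy hxy; rewrite /H -negp_psub hb_neg //.
  apply/negP => /eqP h0.
  have e1 : (P x).1 - (P y).1 = 0.
    move: h0; rewrite /dotp /psub /= => h0.
    have := sqr_ge0 ((P x).1 - (P y).1); have := sqr_ge0 ((P x).2 - (P y).2).
    rewrite !expr2 => h1 h2.
    have : ((P x).1 - (P y).1) * ((P x).1 - (P y).1) = 0 by lra.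
    by move/eqP; rewrite mulf_eq0 orbb => /eqP.
  have e2 : (P x).2 - (P y).2 = 0.
    move: h0; rewrite /dotp /psub /= => h0.
    have := sqr_ge0 ((P x).1 - (P y).1); have := sqr_ge0 ((P x).2 - (P y).2).
    rewrite !expr2 => h1 h2.
    have : ((P x).2 - (P y).2) * ((P x).2 - (P y).2) = 0 by lra.
    by move/eqP; rewrite mulf_eq0 orbb => /eqP.
  move/negP: (hP x y hx hy hxy); apply.
  move/subr0_eq: e1 => e1; move/subr0_eq: e2 => e2.
  by apply/eqP; move: e1 e2; case: (P x) => ? ?; case: (P y) => ? ? /= -> ->.
have Htr : forall x y z, H x y -> H y z -> H x z.
  move=> x y z h1 h2; have := hb_add h1 h2.
  by rewrite /H /psub /= !subrKA.
have Gall : \big[addb/false]_(x <- S5) (let: (a, b, c, d) := x in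
           A a b c (+) A a b d (+) B c d a (+) B c d b) = false.
  apply: big1_seq => x /andP [_ xS]; apply: G; exact: (allP S5_adm x xS).
have Gsplit : \big[addb/false]_(x <- S5) (let: (a, b, c, d) := x in
           A a b c (+) A a b d (+) B c d a (+) B c d b)
   = \big[addb/false]_(x <- S5) (alS A x (+) klS H x).
  apply: eq_big_seq => -[[[a b] c] d] xS.
  have := allP S5_adm _ xS; move=> /and5P [hab hb5 hcd hd5 /and4P [hac had hbc hbd]].
  rewrite /alS /klS (St c d a); last by rewrite /adm3 hcd hd5 (ltn_trans hab hb5) hac had.
  rewrite (St c d b); last by rewrite /adm3 hcd hd5 hb5 hbc hbd.
  by case: (A a b c); case: (A a b d); case: (A c d a); case: (A c d b);
     case: (H a c); case: (H a d); case: (H b c); case: (H b d).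
move: Gall; rewrite Gsplit big_split A_cancel comb_lemma //.
Qed.
End FinalDisc.

Section Asm.
Variable R : realType.

Lemma fin_pos (T : finType) (Q : T -> R -> Prop) :
  (forall x, exists2 m, 0 < m & forall m', 0 < m' -> m' <= m -> Q x m') ->
  exists2 m, 0 < m & forall x, Q x m.
Proof.
move=> h.
have L : forall s : seq T, exists2 m, 0 < m &
    forall x, x \in s -> forall m', 0 < m' -> m' <= m -> Q x m'.
  elim=> [|y s [ms ms0 IH]]; first by exists 1 => //.
  have [my my0 hy] := h y.
  exists (Num.min my ms); first by rewrite lt_min my0 ms0.
  move=> x; rewrite inE => /orP [/eqP ->|xs] m' m0 hm; rewrite le_min in hm;
    case/andP: hm => h1 h2.
    exact: hy.
  exact: IH.
have [m m0 hm] := L (enum T).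
exists m => // x; apply: hm => //; by rewrite mem_enum.
Qed.

Lemma dot_close {z w : R * R} {m : R} : 0 < m -> m <= `|z.1| + `|z.2| ->
  `|w.1 - z.1| < m / 4 -> `|w.2 - z.2| < m / 4 -> 0 < dotp z w.
Proof.
move=> m0 hz h1 h2.
rewrite /dotp.
have e1 : z.1 * w.1 = z.1 * z.1 + z.1 * (w.1 - z.1) by ring.
have e2 : z.2 * w.2 = z.2 * z.2 + z.2 * (w.2 - z.2) by ring.
rewrite e1 e2.
have b1 : - (`|z.1| * (m / 4)) <= z.1 * (w.1 - z.1).
  have : `|z.1 * (w.1 - z.1)| <= `|z.1| * (m / 4).
    by rewrite normrM; apply: ler_wpM2l => //; exact: ltW.
  rewrite ler_norml => /andP [+ _]; by [].
have b2 : - (`|z.2| * (m / 4)) <= z.2 * (w.2 - z.2).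
  have : `|z.2 * (w.2 - z.2)| <= `|z.2| * (m / 4).
    by rewrite normrM; apply: ler_wpM2l => //; exact: ltW.
  rewrite ler_norml => /andP [+ _]; by [].
have s1 : z.1 * z.1 = `|z.1| * `|z.1| by rewrite -normrM ger0_norm // -expr2 sqr_ge0.
have s2 : z.2 * z.2 = `|z.2| * `|z.2| by rewrite -normrM ger0_norm // -expr2 sqr_ge0.
rewrite s1 s2.
set a := `|z.1| in b1 s1 hz *; set b := `|z.2| in b2 s2 hz *.
have a0 : 0 <= a by exact: normr_ge0.
have b0 : 0 <= b by exact: normr_ge0.
have h3 : 0 <= (a + b) * (a + b - m) by apply: mulr_ge0; lra.
have h4 : m * m <= (a + b) * m by apply: ler_wpM2r; lra.
have h5 : 0 <= (a - b) * (a - b) by rewrite -expr2 sqr_ge0.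
have h6 : 0 < m * m by apply: mulr_gt0.
nra.
Qed.

Lemma cell_dot (X X' Y Y' : R * R) (m : R) : 0 < m ->
  m <= `|(psub X Y).1| + `|(psub X Y).2| ->
  `|X'.1 - X.1| < m / 8 -> `|X'.2 - X.2| < m / 8 ->
  `|Y'.1 - Y.1| < m / 8 -> `|Y'.2 - Y.2| < m / 8 ->
  0 < dotp (psub X Y) (psub X' Y').
Proof.
move=> m0 h h1 h2 h3 h4; apply: (dot_close m0 h).
- rewrite /psub /=.
  have -> : X'.1 - Y'.1 - (X.1 - Y.1) = (X'.1 - X.1) - (Y'.1 - Y.1) by ring.
  apply: le_lt_trans (ler_normB _ _) _; lra.
- rewrite /psub /=.
  have -> : X'.2 - Y'.2 - (X.2 - Y.2) = (X'.2 - X.2) - (Y'.2 - Y.2) by ring.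
  apply: le_lt_trans (ler_normB _ _) _; lra.
Qed.

Lemma sN_in (N i : nat) : (0 < N)%N -> (i <= N)%N -> 0 <= (i%:R / N%:R : R) <= 1.
Proof.
move=> N0 iN.
have Np : 0 < N%:R :> R by rewrite ltr0n.
apply/andP; split; first by apply: divr_ge0; rewrite ler0n.
by rewrite ler_pdivrMr // mul1r ler_nat.
Qed.

Lemma sN_0 (N : nat) : (0%N)%:R / N%:R = 0 :> R.
Proof. by rewrite mul0r. Qed.

Lemma sN_N (N : nat) : (0 < N)%N -> N%:R / N%:R = 1 :> R.
Proof. by move=> N0; rewrite divff // pnatr_eq0 -lt0n. Qed.

Lemma sN_step (N i : nat) : (0 < N)%N ->
  `|i.+1%:R / N%:R - i%:R / N%:R| = N%:R^-1 :> R.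
Proof.
by move=> N0; rewrite -mulrBl -natrB // subSnn mul1r ger0_norm // ?invr_ge0 ?ler0n.
Qed.

Lemma itv_cases (s : R) : 0 <= s <= 1 -> s = 0 \/ s = 1 \/ 0 < s < 1.
Proof.
case/andP => h0 h1.
case: (ltrgtP s 0) => hs; first by exfalso; lra.
- case: (ltrgtP s 1) => hs1; last by right; left.
    by right; right; rewrite ?hs ?hs1.
  by exfalso; lra.
- by left.
Qed.
End Asm.
Arguments itv_cases {R s}. Arguments cell_dot {R X X' Y Y' m}. Arguments fin_pos {R T Q}.

Definition planarR (R : realType) (T : Type) (V : T -> Prop) (E : T -> T -> Prop) : Prop :=
  exists (p : T -> R * R) (g : T -> T -> R -> R * R),
    (forall u v, V u -> V v -> p u = p v -> u = v) /\
    (forall u v, V u -> V v -> E u v ->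
       [/\ {within [set t : R | 0 <= t <= 1], continuous (g u v)},
           g u v 0 = p u, g u v 1 = p v,
           (forall s t, 0 <= s <= 1 -> 0 <= t <= 1 -> g u v s = g u v t -> s = t)
         & (forall t w, 0 < t < 1 -> V w -> g u v t <> p w)]) /\
    (forall u v u' v', V u -> V v -> E u v -> V u' -> V v' -> E u' v' ->
       ~ ((u' = u /\ v' = v) \/ (u' = v /\ v' = u)) ->
       forall s t, 0 <= s <= 1 -> 0 <= t <= 1 -> g u v s = g u' v' t ->
       exists w, V w /\ g u v s = p w).

Lemma K5_main (R : realType) (T : Type) (V : T -> Prop) (E : T -> T -> Prop) (v : nat -> T) :
  (forall k, (k < 5)%N -> V (v k)) ->
  (forall k l, (k < 5)%N -> (l < 5)%N -> k != l -> E (v k) (v l)) ->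
  (forall k l, (k < 5)%N -> (l < 5)%N -> k != l -> v k <> v l) ->
  ~ @planarR R T V E.
Proof.
move=> Vv Ev vne [p [g [pinj [hedge hcross]]]].
pose P k := p (v k).
pose G k l := g (v k) (v l).
pose gm k l := G k l \o clamp R.
have Eok : forall k l, (k < 5)%N -> (l < 5)%N -> k != l ->
   [/\ {within [set t : R | 0 <= t <= 1], continuous (G k l)},
       G k l 0 = P k, G k l 1 = P l,
       (forall s t, 0 <= s <= 1 -> 0 <= t <= 1 -> G k l s = G k l t -> s = t)
     & (forall t w, 0 < t < 1 -> V w -> G k l t <> p w)].
  by move=> k l hk hl hkl; exact: (hedge _ _ (Vv k hk) (Vv l hl) (Ev k l hk hl hkl)).
have gcont : forall k l, (k < 5)%N -> (l < 5)%N -> k != l -> continuous (gm k l).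
  by move=> k l hk hl hkl; have [c _ _ _ _] := Eok k l hk hl hkl; exact: ext_cont.
have gmE : forall k l s, 0 <= s <= 1 -> gm k l s = G k l s.
  by move=> k l s hs; rewrite /gm /= clamp_id.
have Pne : forall x y, (x < 5)%N -> (y < 5)%N -> x != y -> P x <> P y.
  move=> x y hx hy hxy e; apply: (vne x y hx hy hxy).
  exact: (pinj _ _ (Vv x hx) (Vv y hy) e).
have disj : forall a b c d, adm4 (a, b, c, d) -> forall s t, 0 <= s <= 1 -> 0 <= t <= 1 ->
    G a b s <> G c d t.
  move=> a b c d hx s t hs ht e.
  move: hx => /and5P [hab hb5 hcd hd5 /and4P [hac had hbc hbd]].
  have ha5 : (a < 5)%N by exact: ltn_trans hab hb5.
  have hc5 : (c < 5)%N by exact: ltn_trans hcd hd5.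
  have hab' : a != b by rewrite neq_ltn hab.
  have hcd' : c != d by rewrite neq_ltn hcd.
  have [_ a0 a1 _ av1] := Eok a b ha5 hb5 hab'.
  have [_ c0 c1 _ av2] := Eok c d hc5 hd5 hcd'.
  have ns : ~ ((v c = v a /\ v d = v b) \/ (v c = v b /\ v d = v a)).
    case=> [[h _]|[h _]].
      by apply: (vne c a hc5 ha5); rewrite // eq_sym.
    by apply: (vne c b hc5 hb5); rewrite // eq_sym.
  have [w [Vw ew]] := hcross (v a) (v b) (v c) (v d) (Vv a ha5) (Vv b hb5)
    (Ev a b ha5 hb5 hab') (Vv c hc5) (Vv d hd5) (Ev c d hc5 hd5 hcd') ns s t hs ht e.
  have endc : forall y, (y < 5)%N -> y != c -> y != d -> P y <> G c d t.
    move=> y hy hyc hyd ey.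
    case: (itv_cases ht) => [t0|[t1|tm]].
    - by apply: (Pne y c hy hc5 hyc); rewrite ey t0 c0.
    - by apply: (Pne y d hy hd5 hyd); rewrite ey t1 c1.
    - exact: (av2 t (v y) tm (Vv y hy)).
  case: (itv_cases hs) => [s0|[s1|sm]].
  - by apply: (endc a ha5 hac had); rewrite -e s0 a0.
  - by apply: (endc b hb5 hbc hbd); rewrite -e s1 a1.
  - exact: (av1 s w sm Vw ew).
have pdisj : forall c d x, adm3 c d x -> forall t, 0 <= t <= 1 -> P x <> G c d t.
  move=> c d x hx t ht ey.
  move: hx => /and5P [hcd hd5 hx5 hxc hxd].
  have hc5 : (c < 5)%N by exact: ltn_trans hcd hd5.
  have hcd' : c != d by rewrite neq_ltn hcd.
  have [_ c0 c1 _ av2] := Eok c d hc5 hd5 hcd'.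
  case: (itv_cases ht) => [t0|[t1|tm]].
  - by apply: (Pne x c hx5 hc5 hxc); rewrite ey t0 c0.
  - by apply: (Pne x d hx5 hd5 hxd); rewrite ey t1 c1.
  - by apply: (av2 t (v x) tm (Vv x hx5)); rewrite -ey.
have [m1 m10 hm1] : exists2 m : R, 0 < m & forall x : 'I_5 * 'I_5 * 'I_5 * 'I_5,
   adm4 (val x.1.1.1, val x.1.1.2, val x.1.2, val x.2) ->
   forall s t, 0 <= s <= 1 -> 0 <= t <= 1 ->
   m <= `|(gm x.1.1.1 x.1.1.2 s).1 - (gm x.1.2 x.2 t).1|
        + `|(gm x.1.1.1 x.1.1.2 s).2 - (gm x.1.2 x.2 t).2|.
  apply: fin_pos => -[[[a b] c] d] /=.
  case: (boolP (adm4 (val a, val b, val c, val d))) => hx; last first.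
    by exists 1 => // m' _ _ hx'; exfalso; exact: (negP hx hx').
  have hx' := hx; move: hx' => /and5P [hab hb5 hcd hd5 _].
  have hab' : val a != val b by rewrite neq_ltn hab.
  have hcd' : val c != val d by rewrite neq_ltn hcd.
  have [m m0 hm] := sep_lemma (gcont a b (ltn_ord a) hb5 hab') (gcont c d (ltn_ord c) hd5 hcd')
    (fun s t hs ht => ltac:(rewrite (gmE _ _ _ hs) (gmE _ _ _ ht); exact: (disj _ _ _ _ hx s t hs ht))).
  exists m => // m' m'0 hm' _ s t hs ht; exact: le_trans hm' (hm s t hs ht).
have [m2 m20 hm2] : exists2 m : R, 0 < m & forall x : 'I_5 * 'I_5 * 'I_5,
   adm3 (val x.1.1) (val x.1.2) (val x.2) ->
   forall t, 0 <= t <= 1 ->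
   m <= `|(P x.2).1 - (gm x.1.1 x.1.2 t).1| + `|(P x.2).2 - (gm x.1.1 x.1.2 t).2|.
  apply: fin_pos => -[[c d] x] /=.
  case: (boolP (adm3 (val c) (val d) (val x))) => hx; last first.
    by exists 1 => // m' _ _ hx'; exfalso; exact: (negP hx hx').
  have hx' := hx; move: hx' => /and5P [hcd hd5 _ _ _].
  have hcd' : val c != val d by rewrite neq_ltn hcd.
  have cP : continuous (fun _ : R => P x) by move=> ?; exact: cvg_cst.
  have [m m0 hm] := sep_lemma cP (gcont c d (ltn_ord c) hd5 hcd')
    (fun s t hs ht => ltac:(rewrite (gmE _ _ _ ht); exact: (pdisj _ _ _ hx t ht))).
  have z01 : 0 <= (0 : R) <= 1 by rewrite lexx ler01.
  exists m => // m' m'0 hm' _ t ht; exact: le_trans hm' (hm 0 t z01 ht).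
pose m := Num.min m1 m2.
have m0 : 0 < m by rewrite lt_min m10 m20.
have m8 : 0 < m / 8 by apply: divr_gt0 => //; rewrite ltr0n.
have [dl dl0 hdl] : exists2 d : R, 0 < d & forall x : 'I_5 * 'I_5,
   (val x.1 < val x.2)%N -> forall s t, 0 <= s <= 1 -> 0 <= t <= 1 -> `|s - t| < d ->
   `|(gm x.1 x.2 s).1 - (gm x.1 x.2 t).1| < m / 8 /\
   `|(gm x.1 x.2 s).2 - (gm x.1 x.2 t).2| < m / 8.
  apply: fin_pos => -[a b] /=.
  case: (boolP (val a < val b)%N) => hab; last first.
    by exists 1 => // m' _ _ hab'; exfalso; exact: (negP hab hab').
  have hab' : val a != val b by rewrite neq_ltn hab.
  have cg := gcont a b (ltn_ord a) (ltn_ord b) hab'.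
  have [d1 d10 hd1] := unif_lemma (fst_cont cg) m8.
  have [d2 d20 hd2] := unif_lemma (snd_cont cg) m8.
  exists (Num.min d1 d2); first by rewrite lt_min d10 d20.
  move=> d' d'0; rewrite le_min => /andP [h1 h2] _ s t hs ht hst.
  split; [apply: hd1 | apply: hd2] => //; exact: (lt_le_trans hst).
pose N := (Num.Def.archi_bound dl^-1).+1.
have N0 : (0 < N)%N by [].
have hN : dl^-1 < N%:R.
  have := @archi_boundP R (dl^-1); rewrite invr_ge0 (ltW dl0) => /(_ isT) h.
  apply: (lt_le_trans h); rewrite ler_nat; exact: leqnSn.
have hstep : N%:R^-1 < dl by rewrite invf_plt ?posrE // ltr0n.
pose s i := (i%:R / N%:R : R).
have s01 : forall i, (i <= N)%N -> 0 <= s i <= 1 by move=> i hi; exact: sN_in.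
have sstep : forall i, `|s i.+1 - s i| < dl by move=> i; rewrite /s sN_step.
have gmd : forall a b, (a < b)%N -> (b < 5)%N -> forall i, (i < N)%N ->
    `|(gm a b (s i.+1)).1 - (gm a b (s i)).1| < m / 8 /\
    `|(gm a b (s i.+1)).2 - (gm a b (s i)).2| < m / 8.
  move=> a b hab hb5 i hi.
  have := hdl (Ordinal (ltn_trans hab hb5), Ordinal hb5).
  move=> /(_ hab (s i.+1) (s i) (s01 _ hi) (s01 _ (ltnW hi)) (sstep i)) /= h.
  exact: h.
have z8 : forall x : R, `|x - x| < m / 8 by move=> x; rewrite subrr normr0.
have mm1 : m <= m1 by rewrite ge_min lexx.
have mm2 : m <= m2 by rewrite ge_min lexx orbT.
apply: (@K5_disc R P gm N s).
- move=> k l hkl hl5.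
  have hk5 : (k < 5)%N by exact: ltn_trans hkl hl5.
  have hkl' : k != l by rewrite neq_ltn hkl.
  have [_ h0 h1 _ _] := Eok k l hk5 hl5 hkl'.
  split.
    by rewrite /s sN_0 gmE ?lexx ?ler01.
  by rewrite /s sN_N // gmE ?lexx ?ler01.
- by move=> x y hx hy hxy; apply/eqP; exact: Pne.
- move=> a b c d hx i j hi hj.
  have hx' := hx; move: hx' => /and5P [hab hb5 hcd hd5 _].
  have ha5 : (a < 5)%N by exact: ltn_trans hab hb5.
  have hc5 : (c < 5)%N by exact: ltn_trans hcd hd5.
  have base : m <= `|(psub (gm a b (s i)) (gm c d (s j))).1| +
                   `|(psub (gm a b (s i)) (gm c d (s j))).2|.
    apply: le_trans mm1 _.
    exact: (hm1 (Ordinal ha5, Ordinal hb5, Ordinal hc5, Ordinal hd5) hx (s i) (s j)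
              (s01 _ (ltnW hi)) (s01 _ (ltnW hj))).
  have [ea1 ea2] := gmd a b hab hb5 i hi.
  have [ec1 ec2] := gmd c d hcd hd5 j hj.
  exists (psub (gm a b (s i)) (gm c d (s j))).
  by split; apply: (cell_dot m0 base).
- move=> c d x hx i hi.
  have hx' := hx; move: hx' => /and5P [hcd hd5 hx5 _ _].
  have hc5 : (c < 5)%N by exact: ltn_trans hcd hd5.
  have base : m <= `|(psub (P x) (gm c d (s i))).1| + `|(psub (P x) (gm c d (s i))).2|.
    apply: le_trans mm2 _.
    exact: (hm2 (Ordinal hc5, Ordinal hd5, Ordinal hx5) hx (s i) (s01 _ (ltnW hi))).
  have [ec1 ec2] := gmd c d hcd hd5 i hi.
  by apply: (cell_dot m0 base).
Qed.

Definition memS (k i : nat) : bool :=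
  match k with
  | 0 => (i == 0%N) || (i == 1%N)
  | 1 => (i == 0%N) || (i == 2%N)
  | 2 => (i == 0%N) || (i == 3%N)
  | 3 => (i == 1%N) || (i == 2%N)
  | _ => (i == 1%N) || (i == 3%N)
  end.

Lemma memS_diff {k l} : (k < 5)%N -> (l < 5)%N -> k != l ->
  exists2 i, (i < 4)%N & memS k i && ~~ memS l i.
Proof.
case: k => [|[|[|[|[|k]]]]] //; case: l => [|[|[|[|[|l]]]]] // _ _ hkl; try by [];
 first [by exists 0%N | by exists 1%N | by exists 2%N | by exists 3%N].
Qed.

Lemma memS_in k : exists2 i, (i < 4)%N & memS k i.
Proof.
case: k => [|[|[|[|k]]]]; [exists 0%N | exists 0%N | exists 0%N | exists 1%N | exists 1%N] => //.
Qed.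

Lemma memS_out k : exists2 i, (i < 4)%N & ~~ memS k i.
Proof.
case: k => [|[|[|[|k]]]]; [exists 2%N | exists 1%N | exists 1%N | exists 0%N | exists 0%N] => //.
Qed.

Section RingPart.
Variables (n : nat) (R : 'I_n -> finComNzRingType) (I : forall i : 'I_n, {pred R i}).
Hypothesis hn : (4 <= n)%N.
Hypothesis hI : forall i, idealr_closed (I i).

Definition vv (k : nat) : prodR R :=
  finfun (fun i : 'I_n => (if memS k i then 1 else 0 : R i)).

Lemma vvE k i : vv k i = (if memS k i then 1 else 0).
Proof. by rewrite /vv ffunE. Qed.

Lemma oneE (i : 'I_n) : (1 : prodR R) i = 1.
Proof. by rewrite /GRing.one /= ffunE. Qed.

Lemma I1 (i : 'I_n) : (1 : R i) \notin I i.
Proof. by case: (hI i). Qed.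

Lemma ord_of {i : nat} : (i < 4)%N -> (i < n)%N.
Proof. by move=> h; exact: leq_trans h hn. Qed.

Lemma no_cover (x y : prodR R) (i : 'I_n) : x i = 1 -> y i = 0 -> ~ in_xR_I (prod_ideal I) y x.
Proof.
move=> hx hy [r [a [ha e]]].
have : x i = y i * r i + a i by rewrite e prodR_addE prodR_mulE.
rewrite hx hy mul0r add0r => e1.
move: ha; rewrite /prod_ideal => /forallP /(_ i).
by rewrite -e1; apply/negP; exact: I1.
Qed.

Lemma vv_vertex k : G2_vertex (prod_ideal I) (vv k).
Proof.
split.
- have [i hi4 hi] := memS_in k.
  apply/negP => /forallP /(_ (Ordinal (ord_of hi4))).
  by rewrite vvE /= hi; apply/negP; exact: I1.
- move=> hall.
  have [i hi4 hi] := memS_out k.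
  apply: (@no_cover 1 (vv k) (Ordinal (ord_of hi4))).
  + by rewrite oneE.
  + by rewrite vvE /= (negbTE hi).
  + exact: hall.
Qed.

Lemma vv_adj k l : (k < 5)%N -> (l < 5)%N -> k != l -> G2_adj (prod_ideal I) (vv k) (vv l).
Proof.
move=> hk hl hkl.
have [i hi4 /andP [hik hil]] := memS_diff hk hl hkl.
have hlk : l != k by rewrite eq_sym.
have [j hj4 /andP [hjl hjk]] := memS_diff hl hk hlk.
split; [|split].
- move=> e.
  have := congr1 (fun x : prodR R => x (Ordinal (ord_of hi4))) e.
  rewrite /= !vvE /= hik (negbTE hil) => /eqP; by rewrite oner_eq0.
- apply: (@no_cover (vv k) (vv l) (Ordinal (ord_of hi4))); rewrite vvE /=.
    by rewrite hik.
  by rewrite (negbTE hil).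
- apply: (@no_cover (vv l) (vv k) (Ordinal (ord_of hj4))); rewrite vvE /=.
    by rewrite hjl.
  by rewrite (negbTE hjk).
Qed.
End RingPart.

Local Close Scope classical_set_scope.

Theorem proposition3p5 (n : nat) (R : 'I_n -> finComNzRingType)
  (I : forall i : 'I_n, {pred R i}) :
  (4 <= n)%N ->
  (forall i, local_ring (R i)) ->
  (forall i, idealr_closed (I i)) ->
  ~ planar (G2_vertex (prod_ideal I)) (G2_adj (prod_ideal I)).
Proof.
move=> hn _ hI hpl.
apply: (@K5_main Rdefinitions.R _ (G2_vertex (prod_ideal I)) (G2_adj (prod_ideal I)) (@vv n R)).
- by move=> k _; exact: vv_vertex.
- by move=> k l hk hl hkl; exact: vv_adj.
- by move=> k l hk hl hkl e; have [] := @vv_adj n R I hn hI k l hk hl hkl.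
- exact: hpl.
Qed.
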